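(* Suppose $1/n\ll\varepsilon_3\ll1$. Let $G$ be a digraph on $n$ vertices with $\delta^0(G)\geq n/2$ and let $A,B,S,T$ be a partition of $V(G)$ satisfying the $AB$-conditions, with sizes $a,b,s,t$ and $b=a+d$ for some $d>0$. Then $E(B\cup T,B)$ contains a matching of size $d+2$, i.e. $d+2$ pairwise vertex-disjoint edges each going from $B\cup T$ to $B$.
   Context: Digraphs have no loops and at most one edge in each direction between two vertices; $\delta^0$ is the minimum semidegree; $E(X,Y)$ is the set of edges $xy$ with $x\in X,y\in Y$. $d^+_X(x)=|N^+(x)\cap X|$, $d^-_X(x)=|N^-(x)\cap X|$, $d^\pm_X(x)\geq c$ means both $\geq c$ and $d^\pm_X(x)<c$ means both $<c$. $G[A,B]$ is the digraph on $A\cup B$ with edges of $G$ between $A$ and $B$ in either direction. The $AB$-conditions on a partition $A,B,S,T$ of sizes $a,b,s,t$: $a\leq b$, $s\leq t$; $\lfloor n/2\rfloor-\varepsilon_3 n\leq a,b\leq\lceil n/2\rceil+\varepsilon_3n$; $\delta^0(G[A,B])\geq n/50$; $d^\pm_B(x)\geq n/2-\varepsilon_3n$ for all but at most $\varepsilon_3n$ vertices $x\in A$; $d^\pm_A(x)\geq n/2-\varepsilon_3n$ for all but at most $\varepsilon_3n$ vertices $x\in B$; $s+t\leq\varepsilon_3n$; $d^-_A(x),d^+_B(x)\geq n/50$ for all $x\in S$; $d^-_B(x),d^+_A(x)\geq n/50$ for all $x\in T$; if $a<b$ then $d^\pm_B(x)<n/20$ for all $x\in B$, $d^-_B(x)<n/20$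 for all $x\in S$ and $d^+_B(x)<n/20$ for all $x\in T$. The hierarchy $\alpha\ll\beta$ means $\alpha$ is sufficiently small as a function of $\beta$. *)

(* Defs.v *)
(* Digraphs: a finite vertex type V with an irreflexive
   relation e : rel V (e x y = "xy is an edge"); a rel automatically has at
   most one edge in each direction between two vertices. Real-valued
   thresholds are compared in rat. *)
From HB Require Import structures.
From mathcomp Require Import all_boot all_order all_algebra.
Set Implicit Arguments. Unset Strict Implicit. Unset Printing Implicit Defensive.
Import Order.TTheory GRing.Theory Num.Theory.
Local Open Scope ring_scope.

Section Digraph.
Variables (V : finType) (e : rel V).

Definition outdeg_in (X : {set V}) (x : V) : nat := #|[set y in X | e x y]|.
Definition indeg_in (X : {set V}) (x : V) : nat := #|[set y in X | e y x]|.

Definition nR : rat := (#|V|)%:R.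

Definition min_semideg_ge (c : rat) : Prop :=
  forall x : V, c <= (outdeg_in [set: V] x)%:R /\ c <= (indeg_in [set: V] x)%:R.

Definition bip_rel (A B : {set V}) : rel V :=
  fun x y => e x y && (((x \in A) && (y \in B)) || ((x \in B) && (y \in A))).

Definition bip_min_semideg_ge (A B : {set V}) (c : rat) : Prop :=
  forall x, x \in A :|: B ->
    c <= (#|[set y in A :|: B | bip_rel A B x y]|)%:R /\
    c <= (#|[set y in A :|: B | bip_rel A B y x]|)%:R.

Definition AB_conditions (eps3 : rat) (A B S T : {set V}) : Prop :=
  let n := nR in
  ([&& [disjoint A & B], [disjoint A & S], [disjoint A & T],
       [disjoint B & S], [disjoint B & T] & [disjoint S & T]] /\
   A :|: B :|: S :|: T = [set: V]) /\
  (#|A| <= #|B|)%N /\ (#|S| <= #|T|)%N /\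
  ((#|V|./2)%:R - eps3 * n <= (#|A|)%:R /\
   (#|A|)%:R <= (uphalf #|V|)%:R + eps3 * n /\
   (#|V|./2)%:R - eps3 * n <= (#|B|)%:R /\
   (#|B|)%:R <= (uphalf #|V|)%:R + eps3 * n) /\
  bip_min_semideg_ge A B (n / 50%:R) /\
  (#|[set x in A | ~~ ((n / 2%:R - eps3 * n <= (outdeg_in B x)%:R) &&
                        (n / 2%:R - eps3 * n <= (indeg_in B x)%:R))]|)%:R
     <= eps3 * n /\
  (#|[set x in B | ~~ ((n / 2%:R - eps3 * n <= (outdeg_in A x)%:R) &&
                        (n / 2%:R - eps3 * n <= (indeg_in A x)%:R))]|)%:R
     <= eps3 * n /\
  (#|S| + #|T|)%:R <= eps3 * n /\
  (forall x, x \in S -> n / 50%:R <= (indeg_in A x)%:R /\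
                        n / 50%:R <= (outdeg_in B x)%:R) /\
  (forall x, x \in T -> n / 50%:R <= (indeg_in B x)%:R /\
                        n / 50%:R <= (outdeg_in A x)%:R) /\
  ((#|A| < #|B|)%N ->
     (forall x, x \in B -> (outdeg_in B x)%:R < n / 20%:R /\
                           (indeg_in B x)%:R < n / 20%:R) /\
     (forall x, x \in S -> (indeg_in B x)%:R < n / 20%:R) /\
     (forall x, x \in T -> (outdeg_in B x)%:R < n / 20%:R)).

Definition matching_from_to (X Y : {set V}) (M : {set V * V}) : Prop :=
  (forall p, p \in M -> [/\ e p.1 p.2, p.1 \in X & p.2 \in Y]) /\
  (forall p q, p \in M -> q \in M -> p != q ->
     [/\ p.1 != q.1, p.1 != q.2, p.2 != q.1 & p.2 != q.2]).

End Digraph.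

(* Main.v *)
Require Import Defs.
From HB Require Import structures.
From mathcomp Require Import all_boot all_order all_algebra.
From mathcomp Require Import zify lra.
Import Order.TTheory GRing.Theory Num.Theory.
Local Open Scope ring_scope.

Local Open Scope nat_scope.
Lemma card_sum (V : finType) (U : {set V}) (P : pred V) :
  #|[set u in U | P u]| = \sum_(u in U) (P u : nat).
Proof.
rewrite -sum1_card (eq_bigl (fun u => (u \in U) && P u)); last by move=> u; rewrite inE.
by rewrite big_mkcondr; apply: eq_bigr => u _; case: (P u).
Qed.

Lemma grow (V : finType) (e : rel V) (B T : {set V}) (n d : nat) (M : {set V * V}) :
  matching_from_to e (B :|: T) B M ->
  (forall y, y \in B -> d <= 2 * indeg_in e (B :|: T) y) ->
  (forall u, u \in B :|: T -> 20 * outdeg_in e B u < n) ->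
  2 * #|M| * n < 10 * d * (#|B| - 2 * #|M|) ->
  exists M', matching_from_to e (B :|: T) B M' /\ #|M'| = #|M|.+1.
Proof.
move=> [HM1 HM2] Hin Hout Hnum.
set U := [set p.1 | p in M] :|: [set p.2 | p in M].
have HU : U \subset B :|: T.
  apply/subsetP => x; rewrite inE => /orP [] /imsetP [p pM ->];
    have [_ h1 h2] := HM1 p pM => //; by rewrite inE h2.
have cU : #|U| <= 2 * #|M|.
  apply: leq_trans (leq_card_setU _ _) _.
  by rewrite mul2n -addnn; apply: leq_add; apply: leq_imset_card.
case: (boolP [exists y in B :\: U, exists u in (B :|: T) :\: U, e u y]).
- move=> /existsP [y /andP [yBU /existsP [u /andP [uBU euy]]]].
  move: yBU uBU; rewrite !in_setD => /andP [yU yB] /andP [uU uBT].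
  have notU : forall x p, p \in M -> x \notin U -> (p.1 != x) && (p.2 != x).
    move=> x p pM; apply: contraR; rewrite negb_and !negbK => /orP [] /eqP <-;
      rewrite inE; apply/orP; [left|right]; apply/imsetP; by exists p.
  exists ((u, y) |: M); split; last first.
    rewrite cardsU1; suff -> : (u, y) \notin M by [].
    apply/negP => uyM; have := notU u _ uyM uU; by rewrite eqxx.
  split.
    move=> p; rewrite in_setU1 => /orP [/eqP -> /=|pM]; last exact: HM1.
    by split.
  move=> p q; rewrite !in_setU1 => /orP [/eqP ->|pM] /orP [/eqP ->|qM].
  + by rewrite eqxx.
  + move=> _ /=; have /andP[a1 a2] := notU u q qM uU; have /andP[b1 b2] := notU y q qM yU.
    by split; rewrite eq_sym.
  + move=> _ /=; have /andP[a1 a2] := notU u p pM uU; have /andP[b1 b2] := notU y p pM yU.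
    by split.
  + exact: HM2.
- rewrite negb_exists => /forallP Hbad.
  exfalso; move: Hnum; apply/negP; rewrite -leqNgt.
  set BU := B :\: U.
  have cBU : #|B| - 2 * #|M| <= #|BU|.
    rewrite cardsD; have := subset_leq_card (subsetIr B U); lia.
  have S1 : d * #|BU| <= 2 * \sum_(y in BU) #|[set u in U | e u y]|.
    rewrite mulnC -sum_nat_const big_distrr /=; apply: leq_sum => y yBU.
    apply: leq_trans (Hin y _) _.
      by move: yBU; rewrite inE => /andP [].
    rewrite leq_mul2l; apply/orP; right; apply: subset_leq_card.
    apply/subsetP => u; rewrite !inE => /andP [uBT euy]; rewrite euy andbT.
    have := Hbad y; rewrite yBU /= negb_exists => /forallP /(_ u).
    by rewrite !inE uBT euy !andbT negbK.
  have S2 : \sum_(y in BU) #|[set u in U | e u y]| = \sum_(u in U) #|[set y in BU | e u y]|.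
    under eq_bigr do rewrite card_sum.
    rewrite exchange_big /=; apply: eq_bigr => u _; by rewrite card_sum.
  have S3 : 20 * \sum_(u in U) #|[set y in BU | e u y]| <= #|U| * n.
    rewrite -sum_nat_const big_distrr /=; apply: leq_sum => u uU.
    apply: leq_trans (ltnW (Hout u _)); last by apply: (subsetP HU).
    rewrite leq_mul2l; apply/orP; right; apply: subset_leq_card.
    apply/subsetP => y; rewrite !inE => /andP [/andP [_ yB] ->]; by rewrite yB.
  rewrite S2 in S1.
  have := leq_mul (leqnn d) cBU.
  have := leq_mul cU (leqnn n). nia.
Qed.
Local Open Scope ring_scope.

Lemma cardU_dis (V : finType) (X Y : {set V}) :
  [disjoint X & Y] -> #|X :|: Y| = (#|X| + #|Y|)%N.
Proof. by move=> d; rewrite cardsU (disjoint_setI0 d) cards0 subn0. Qed.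

Lemma disU (V : finType) (X Y Z : {set V}) :
  [disjoint X & Z] -> [disjoint Y & Z] -> [disjoint X :|: Y & Z].
Proof.
by move=> h1 h2; rewrite -setI_eq0 setIUl (disjoint_setI0 h1) (disjoint_setI0 h2) setU0.
Qed.

Theorem proposition6p2 :
  exists eps0 : rat, 0 < eps0 /\
  forall eps3 : rat, 0 < eps3 -> eps3 <= eps0 ->
  exists N : nat,
  forall (V : finType) (e : rel V) (A B S T : {set V}),
    (N <= #|V|)%N ->
    irreflexive e ->
    min_semideg_ge e ((#|V|)%:R / 2%:R) ->
    AB_conditions e eps3 A B S T ->
    (#|A| < #|B|)%N ->
    exists M : {set V * V},
      matching_from_to e (B :|: T) B M /\ #|M| = ((#|B| - #|A|) + 2)%N.
Proof.
exists (1/100); split; first lra.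
move=> eps he0 he1; exists 100%N => V e A B S T hN irr hdeg hAB hab.
move: hAB; rewrite /AB_conditions /nR /=.
move=> [[hdis hcov] [_ [hst [[ha1 [ha2 [hb1 hb2]]] [_ [_ [_ [_ [_ [_ hlt]]]]]]]]]].
have [hltB [_ hltT]] := hlt hab.
move: hdis => /and5P [dAB dAS dAT dBS /andP [dBT dST]].
have hn : #|V| = (#|A| + #|B| + #|S| + #|T|)%N.
  rewrite -cardsT -hcov !cardU_dis //; by repeat apply: disU.
have Hin : forall y, y \in B -> (#|B| - #|A| <= 2 * indeg_in e (B :|: T) y)%N.
  move=> y yB.
  have h1 : (#|V| <= 2 * indeg_in e [set: V] y)%N.
    have [_ h] := hdeg y.
    by rewrite ler_pdivrMr // -natrM ler_nat mulnC in h.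
  have h2 : (indeg_in e [set: V] y <= #|A| + indeg_in e (B :|: T) y + #|S|)%N.
    rewrite /indeg_in.
    apply: leq_trans (subset_leq_card
      (_ : _ \subset A :|: [set z in B :|: T | e z y] :|: S)) _.
      apply/subsetP => z; rewrite !inE => /= ezy; rewrite ezy andbT.
      move: (in_setT z); rewrite -hcov !inE.
      by case: (z \in A); case: (z \in B); case: (z \in S); case: (z \in T).
    apply: leq_trans (leq_card_setU _ _) _; rewrite leq_add2r.
    exact: leq_card_setU.
  clear -h1 h2 hn hst hab; lia.
have Hout : forall u, u \in B :|: T -> (20 * outdeg_in e B u < #|V|)%N.
  have h20 : (0:rat) < 20%:R by rewrite ltr0n.
  move=> u; rewrite inE => /orP [uB|uT];
    [have [h _] := hltB u uB | have h := hltT u uT];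
    by rewrite (ltr_pdivlMr _ _ h20) -natrM ltr_nat mulnC in h.
have Hnum : (2 * #|V| + 10 * (#|B| - #|A|) + 10 < 5 * #|B|)%N.
  have e1 : (#|V| <= #|V|./2 + #|V|./2 + 1)%N.
    move: (odd_double_half #|V|); clear; lia.
  have e2 : (uphalf #|V| <= #|V|./2 + 1)%N.
    rewrite uphalf_half; clear; case: odd; lia.
  have hN' : (100 <= #|V|)%N by [].
  rewrite -(ler_nat rat) !natrD in e1.
  rewrite -(ler_nat rat) !natrD in e2.
  rewrite -(ler_nat rat) in hN'.
  have hX : eps * #|V|%:R <= 1 / 100 * #|V|%:R.
    by apply: ler_wpM2r; [exact: ler0n | exact: he1].
  have hX0 : 0 <= eps * #|V|%:R := mulr_ge0 (ltW he0) (ler0n _ _).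
  suff : ((2 * #|V| + 10 * (#|B| - #|A|) + 10)%N%:R < (5 * #|B|)%N%:R :> rat)
    by rewrite ltr_nat.
  rewrite !natrD natrB; last exact: ltnW.
  clear hlt hltB hltT Hin Hout hdeg.
  lra.
set d := (#|B| - #|A|)%N.
have d1 : (1 <= d)%N by rewrite /d subn_gt0.
suff : forall m, (m <= d + 2)%N -> exists M : {set V * V},
    matching_from_to e (B :|: T) B M /\ #|M| = m by apply.
elim=> [|m IH] hm.
  exists set0; split; last exact: cards0.
  by split=> p; rewrite inE.
have [M [HM cM]] := IH (ltnW hm).
have hm' : (m <= d + 1)%N by move: hm; clear; lia.
have Hnum' : (2 * #|M| * #|V| < 10 * d * (#|B| - 2 * #|M|))%N.
  rewrite cM.
  move: Hnum; rewrite -/d => Hnum.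
  move: hm' d1 Hnum; clear; move: #|B| #|V| => b n hm' d1 Hnum.
  have hr : (2 * n < 5 * (b - 2 * m))%N by lia.
  have h1 : (2 * m * n <= 2 * (d + 1) * n)%N by rewrite leq_mul2r leq_mul2l hm' !orbT.
  have h2 : (2 * (d + 1) * n <= 4 * d * n)%N by rewrite leq_mul2r; apply/orP; right; lia.
  apply: leq_ltn_trans h1 _; apply: leq_ltn_trans h2 _.
  have : (d * (2 * n) < d * (5 * (b - 2 * m)))%N by rewrite ltn_pmul2l.
  lia.
have [M' [HM' cM']] := @grow V e B T #|V| d M HM Hin Hout Hnum'.
by exists M'; rewrite cM' cM.
Qed.
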